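(* Let $q$ be an odd prime power, let $t\ge0$ and $k\ge1$ be integers and $n=2k$. Let $\delta\in\mathbb{F}_{q^k}$, let $\alpha\in\mathbb{F}_{q^n}$ satisfy $\alpha^{q^k}=-\alpha$ and $\beta\in\mathbb{F}_{q^n}$ satisfy $\beta^{q^k}=-\beta$. Let $L(x)=\sum_i a_i x^{q^i}$ be a $q$-polynomial with all coefficients $a_i\in\mathbb{F}_{q^k}$. Then $$f(x)=\alpha(x^{q^k}+x+\delta)^t+\beta\,\mathrm{Tr}(x)+L(x)$$ is a permutation polynomial of $\mathbb{F}_{q^n}$ if and only if $L(x)$ is a permutation polynomial of $\mathbb{F}_{q^n}$.
   Context: $\mathrm{Tr}$ denotes the trace function from $\mathbb{F}_{q^n}$ to $\mathbb{F}_q$, $\mathrm{Tr}(x)=x+x^q+\cdots+x^{q^{n-1}}$. A permutation polynomial of $\mathbb{F}_{q^n}$ is one inducing a bijection of $\mathbb{F}_{q^n}$. *)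

(* Defs.v *)
From HB Require Import structures.
From mathcomp Require Import all_boot all_order all_algebra all_field.
Set Implicit Arguments. Unset Strict Implicit. Unset Printing Implicit Defensive.
Import GRing.Theory.
Local Open Scope ring_scope.

Definition trF (F : finFieldType) (q n : nat) (x : F) : F :=
  \sum_(i < n) x ^+ (q ^ i).

Definition qlinpoly (F : finFieldType) (q : nat) (a : seq F) (x : F) : F :=
  \sum_(i < size a) a`_i * x ^+ (q ^ i).

Definition odd_prime_power (q : nat) : Prop :=
  exists p m : nat, [/\ prime p, odd p, (0 < m)%N & q = (p ^ m)%N].

(* Main.v *)
Require Import Defs.
From HB Require Import structures.
From mathcomp Require Import all_boot all_order all_algebra all_field.
From mathcomp Require Import ring.
Import GRing.Theory.
Local Open Scope ring_scope.

Theorem mainTheorem5 (F : finFieldType) (q t k : nat)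
    (delta alpha beta : F) (a : seq F) :
  odd_prime_power q -> (1 <= k)%N -> #|F| = (q ^ (2 * k))%N ->
  delta ^+ (q ^ k) = delta ->
  alpha ^+ (q ^ k) = - alpha ->
  beta ^+ (q ^ k) = - beta ->
  (forall i, (i < size a)%N -> a`_i ^+ (q ^ k) = a`_i) ->
  (bijective (fun x : F => alpha * (x ^+ (q ^ k) + x + delta) ^+ t
                           + beta * trF q (2 * k) x + qlinpoly q a x)
   <-> bijective (qlinpoly q a)).
Proof.
move=> [p [m [pp op m0 ->]]] k1 cardF hd ha hb hcoef.
set Q := (p ^ m)%N in cardF hd ha hb hcoef *.
have pc : p \in [pchar F].
  by apply: (card_finPcharP (n := (m * (2 * k))%N)) => //; rewrite cardF -expnM.
have Qpos : (0 < Q)%N by rewrite expn_gt0 prime_gt0.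
have z0 : forall i, (0 : F) ^+ (Q ^ i) = 0.
  by move=> i; rewrite expr0n gtn_eqF // expn_gt0 Qpos.
have frobD : forall i (x y : F), (x + y) ^+ (Q ^ i) = x ^+ (Q ^ i) + y ^+ (Q ^ i).
  move=> i x y; apply: exprDn_pchar.
  by rewrite (eq_pnat _ (pcharf_eq pc)) -expnM pnatX pnat_id.
have frobN : forall i (x : F), (- x) ^+ (Q ^ i) = - x ^+ (Q ^ i).
  move=> i x; have := frobD i (- x) x; rewrite addNr z0 => /eqP.
  by rewrite eq_sym addr_eq0 => /eqP.
pose s := fun x : F => x ^+ (Q ^ k).
have sd : s delta = delta := hd.
have sa : s alpha = - alpha := ha.
have sb : s beta = - beta := hb.
have sD : forall x y, s (x + y) = s x + s y by move=> x y; apply: frobD.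
have sN : forall x, s (- x) = - s x by move=> x; apply: frobN.
have sM : forall x y, s (x * y) = s x * s y by move=> x y; rewrite /s exprMn.
have s0 : s 0 = 0 by apply: z0.
have sK : forall x, s (s x) = x.
  by move=> x; rewrite /s -exprM -expnD addnn -mul2n -cardF expf_card.
have sC : forall i x, s (x ^+ (Q ^ i)) = (s x) ^+ (Q ^ i).
  by move=> i x; rewrite /s -!exprM mulnC.
pose L := @qlinpoly F Q a.
have LD : forall x y, L (x + y) = L x + L y.
  move=> x y; rewrite /L /qlinpoly -big_split; apply: eq_bigr => i _.
  by rewrite frobD mulrDr.
have LN : forall x, L (- x) = - L x.
  move=> x; rewrite /L /qlinpoly -sumrN; apply: eq_bigr => i _.
  by rewrite frobN mulrN.
have L0 : L 0 = 0.
  have := LD 0 0; rewrite addr0 => /(congr1 (fun w => w - L 0)).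
  by rewrite subrr addrK => <-.
have Ls : forall x, s (L x) = L (s x).
  move=> x; rewrite /L /qlinpoly (big_morph s sD s0); apply: eq_bigr => i _.
  by rewrite sM sC; congr (_ * _); apply: hcoef.
pose Tr := @trF F Q (2 * k).
have TrE : forall x, Tr x = \sum_(i < k) (s x + x) ^+ (Q ^ i).
  move=> x; rewrite /Tr /trF mul2n -addnn big_split_ord /= -big_split /=.
  apply: eq_bigr => i _; rewrite frobD addrC; congr (_ + _).
  by rewrite /s -exprM -expnD.
have sTr : forall x, s (Tr x) = Tr x.
  move=> x; rewrite TrE (big_morph s sD s0); apply: eq_bigr => i _.
  by rewrite sC sD sK addrC.
pose f := fun x : F => alpha * (s x + x + delta) ^+ t + beta * Tr x + L x.
change (bijective f <-> bijective L).
have sg : forall x, s (s x + x + delta) = s x + x + delta.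
  by move=> x; rewrite !sD sK sd (addrC x).
have psif : forall x, s (f x) + f x = L (s x + x).
  move=> x; rewrite /f !sD !sM sTr Ls LD.
  have -> : s ((s x + x + delta) ^+ t) = (s x + x + delta) ^+ t.
    by rewrite /s exprAC; congr (_ ^+ _); apply: sg.
  rewrite sa sb; ring.
split.
- move=> [g fg gf]; have finj := can_inj fg.
  apply: injF_bij => x y Lxy.
  apply/subr0_eq; set z := x - y.
  have Lz : L z = 0 by rewrite /z LD LN Lxy subrr.
  have z2 : z - s z = 0.
    apply: finj; rewrite /f !TrE.
    have -> : s (z - s z) + (z - s z) = 0 by rewrite sD sN sK; ring.
    rewrite s0 !addr0 LD LN -Ls Lz s0 subrr L0.
    by rewrite (eq_bigr (fun _ => 0)) ?big1 // => i _; rewrite z0.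
  have sz : s z = z by apply/esym/subr0_eq.
  pose S := [set u : F | s u == u].
  have two0 : (1 + 1 : F) != 0.
    rewrite -mulr2n -(dvdn_pcharf pc) dvdn_prime2 //.
    by apply/eqP => p2; rewrite p2 in op.
  have s2 : s (1 + 1) = 1 + 1 by rewrite sD /s expr1n.
  have sh : s (1 + 1)^-1 = (1 + 1)^-1 by rewrite /s exprVn -/(s (1 + 1)) s2.
  have SL : S \subset L @: S.
    apply/subsetP => u; rewrite inE => /eqP su.
    apply/imsetP; exists (s (g (u / (1 + 1))) + g (u / (1 + 1))).
      by rewrite inE sD sK addrC.
    rewrite -psif gf sM su sh -mulrDr.
    have e2 : ((1 + 1)^-1 + (1 + 1)^-1 : F) = 1.
      by apply: (mulfI two0); rewrite mulrDr mulfV // mulr1.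
    by rewrite e2 mulr1.
  have cardE : #|L @: S| == #|S|.
    by rewrite eqn_leq leq_imset_card subset_leq_card.
  have Linj := imset_injP cardE.
  apply: Linj; rewrite ?inE ?sz ?s0 // Lz L0 //.
- move=> [g Lg gL]; have Linj := can_inj Lg.
  apply: injF_bij => x y fxy.
  have ep : s x + x = s y + y.
    by apply: Linj; rewrite -(psif x) -(psif y) fxy.
  apply: Linj; move: fxy; rewrite /f !TrE ep; by move/addrI.
Qed.
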